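(* Let $P$ be a positive, completely labelled causal logic program, $p$ an atom, $k\in\{1,2,\dots\}\cup\{\omega\}$ and $G$ a causal graph. If $G$ is a $\le$-maximal element of $T_P\!\uparrow\!k(p)$ and $\mathrm{height}(G)=h\le k$, then $G\in T_P\!\uparrow\!h(p)$.
   Context: Causal graphs: reflexively–transitively closed directed graphs on labels; $G\le G'$ iff $G\supseteq G'$; $G*G'=(G\cup G')^*$, $G\cdot G'$ the closure of the graph with vertices $V\cup V'$ and edges $E\cup E'\cup(V\times V')$. Causal values: down-sets of causal graphs; $*$ intersection, $+$ union, $U\cdot U'={\downarrow}\{G\cdot G'\}$; a label $l$ denotes ${\downarrow}$ of the graph with only edge $(l,l)$, $1$ all causal graphs, $0=\emptyset$. Rules $t:H\leftarrow B_1,\dots,B_n$; positive = no default negation; completely labelled = every rule has a label and labels are pairwise distinct. $T_P(I)(p)=\sum\{(I(B_1)*\dots*I(B_n))\cdot t\mid(t:p\leftarrow B_1,\dots,B_n)\in P\}$, $T_P\!\uparrow\!0=$ all atoms $0$, $T_P\!\uparrow\!(k+1)=T_P(T_P\!\uparrow\!k)$, $T_P\!\uparrow\!\omega(p)=\sum_{k<\omega}T_P\!\uparrow\!k(p)$. $\mathrm{height}(G)$ is the maximal number of vertices of a simple directed path (no repeated vertices) in $G$; a single-vertex graph has height $1$. *)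

(* Defs.v *)
From Stdlib Require Import List Relations Arith.
Import ListNotations.
Set Implicit Arguments.

Section Causal.
Variable L : Type.

(* an edge relation on labels; a causal graph is identified with its edge set *)
Definition graph := L -> L -> Prop.

Definition endpoint (R : graph) (x : L) : Prop := exists y, R x y \/ R y x.

Definition clos (R : graph) : graph :=
  fun x y => (x = y /\ endpoint R x) \/ clos_trans L R x y.

Definition is_cgraph (G : graph) : Prop :=
  (forall x y, G x y -> G x x /\ G y y) /\
  (forall x y z, G x y -> G y z -> G x z).

(* G <= G'  iff  G is a superset of G' *)
Definition gle (G G' : graph) : Prop := forall x y, G' x y -> G x y.

Definition gprod (G G' : graph) : graph := clos (fun x y => G x y \/ G' x y).

Definition gapp (G G' : graph) : graph :=
  clos (fun x y => G x y \/ G' x y \/ (endpoint G x /\ endpoint G' y)).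

(* causal values: down-sets of causal graphs, represented as predicates *)
Definition cvalue := graph -> Prop.

Definition downset (S : graph -> Prop) : cvalue :=
  fun G => is_cgraph G /\ exists G', S G' /\ gle G G'.

Definition vone : cvalue := is_cgraph.
Definition vzero : cvalue := fun _ => False.
Definition vprod (U U' : cvalue) : cvalue := fun G => U G /\ U' G.
Definition vapp (U U' : cvalue) : cvalue :=
  downset (fun G => exists G1 G2, U G1 /\ U' G2 /\
                      forall x y, G x y <-> gapp G1 G2 x y).
Definition vlabel (l : L) : cvalue :=
  downset (fun G => forall x y, G x y <-> (x = l /\ y = l)).

Definition maximal_in (U : cvalue) (G : graph) : Prop :=
  U G /\ forall G', U G' -> gle G G' -> gle G' G.

Fixpoint path_edges (G : graph) (s : list L) : Prop :=
  match s with
  | x :: ((y :: _) as t) => G x y /\ path_edges G t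
  | _ => True
  end.

Definition simple_path (G : graph) (s : list L) : Prop :=
  NoDup s /\ Forall (fun x => G x x) s /\ path_edges G s.

Definition has_height (G : graph) (h : nat) : Prop :=
  (exists s, simple_path G s /\ length s = h) /\
  (forall s, simple_path G s -> length s <= h).

End Causal.

Section Programs.
Variables L A : Type.

Record rule := mkRule { rlabel : L; rhead : A; rbody : list A }.

Definition program := rule -> Prop.

(* labels pairwise distinct (every rule carries a label by construction) *)
Definition completely_labelled (P : program) : Prop :=
  forall r r', P r -> P r' -> rlabel r = rlabel r' -> r = r'.

Definition interp := A -> cvalue L.

Definition body_val (I : interp) (b : list A) : cvalue L :=
  fold_right (fun a U => vprod (I a) U) (@vone L) b.

Definition TP (P : program) (I : interp) : interp :=
  fun p G => exists r, P r /\ rhead r = p /\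
               vapp (body_val I (rbody r)) (vlabel (rlabel r)) G.

Fixpoint TPup (P : program) (n : nat) : interp :=
  match n with
  | 0 => fun _ => @vzero L
  | S m => TP P (TPup P m)
  end.

Definition TPomega (P : program) : interp :=
  fun p G => exists n, TPup P n p G.

End Programs.

Inductive ext_nat := Fin (n : nat) | Omega.

Definition valid_k (k : ext_nat) : Prop :=
  match k with Fin n => 1 <= n | Omega => True end.

Definition le_ext (h : nat) (k : ext_nat) : Prop :=
  match k with Fin n => h <= n | Omega => True end.

Definition TPup_ext {L A : Type} (P : program L A) (k : ext_nat) : interp L A :=
  match k with Fin n => TPup P n | Omega => TPomega P end.

(* Main.v *)
Require Import Defs.
From Stdlib Require Import List Relations Arith.
From Stdlib Require Import Classical Lia Wf_nat Permutation.
Import ListNotations.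

Definition rst {L} (G : graph L) (l : L) : graph L :=
  fun x y => G x y /\ G x l /\ G y l.
Definition rmv {L} (G : graph L) (l : L) : graph L :=
  fun x y => G x y /\ x <> l /\ y <> l.
Definition bounded {L} (G : graph L) (h : nat) : Prop :=
  forall s, simple_path G s -> length s <= h.

Lemma cg_rst {L} (G : graph L) l : is_cgraph G -> is_cgraph (rst G l).
Proof.
  intros [r t]; split.
  - intros x y [h1 [h2 h3]]. destruct (r _ _ h1). unfold rst; tauto.
  - intros x y z [h1 [h2 h3]] [k1 [k2 k3]]. unfold rst; split; eauto.
Qed.

Lemma cg_rmv {L} (G : graph L) l : is_cgraph G -> is_cgraph (rmv G l).
Proof.
  intros [r t]; split.
  - intros x y [h1 [h2 h3]]. destruct (r _ _ h1). unfold rmv; tauto.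
  - intros x y z [h1 [h2 h3]] [k1 [k2 k3]]. unfold rmv; split; eauto.
Qed.

Section S.
Variables L A : Type.
Variable P : program L A.

Lemma body_val_iff (I : interp L A) bs G :
  body_val I bs G <-> (forall b, In b bs -> I b G) /\ is_cgraph G.
Proof.
  induction bs; simpl.
  - unfold vone; split; [intros; split; [intros; contradiction|auto]|tauto].
  - unfold vprod. rewrite IHbs. split.
    + intros [h1 [h2 h3]]. split; auto. intros b [<-|hb]; auto.
    + intros [h1 h2]. split; auto.
Qed.

Lemma mono_graph n a (G H : graph L) :
  TPup P n a H -> is_cgraph G -> gle G H -> TPup P n a G.
Proof.
  destruct n; simpl; intros Ht cg le; [contradiction|]. unfold vapp, downset in *.
  destruct Ht as [r [Pr [hd [cgH [G' [HG' le']]]]]].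
  exists r. split; auto. split; auto. split. { apply cg. } exists G'. split; auto.
  intros x y h. apply le, le', h.
Qed.

Lemma char1 n a (G : graph L) :
  TPup P (S n) a G -> is_cgraph G /\ exists r, P r /\ rhead r = a /\
    G (rlabel r) (rlabel r) /\
    forall b, In b (rbody r) -> TPup P n b (rst G (rlabel r)).
Proof.
  simpl. unfold vapp, downset. intros [r [Pr [hd [cg [G' [[G1 [G2 [HB [HL Heq]]]] le]]]]]].
  split; auto. exists r. split; auto. split; auto.
  set (l := rlabel r) in *.
  destruct HL as [cg2 [G3 [H3 le3]]].
  assert (G2l : G2 l l) by (apply le3, H3; auto).
  assert (edge : forall x y, (G1 x y \/ G2 x y \/ (endpoint G1 x /\ endpoint G2 y)) -> G x y).
  { intros x y hr. apply le, Heq. unfold gapp, clos. right. apply t_step. exact hr. }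
  split; [apply edge; auto|].
  apply body_val_iff in HB as [HB cg1].
  intros b hb. apply mono_graph with G1; auto. apply cg_rst; auto.
  intros x y h. unfold rst. split; [apply edge; auto|]. split; apply edge; right; right; split.
  - exists y; auto.
  - exists l; auto.
  - exists x; auto.
  - exists l; auto.
Qed.

Lemma char2 n (G : graph L) r :
  is_cgraph G -> P r -> G (rlabel r) (rlabel r) ->
  (forall b, In b (rbody r) -> TPup P n b (rst G (rlabel r))) ->
  TPup P (S n) (rhead r) G.
Proof.
  intros cg Pr Hll Hb. simpl. exists r. split; auto. split; auto.
  set (l := rlabel r) in *.
  unfold vapp, downset. split; auto.
  exists (gapp (rst G l) (fun x y => x = l /\ y = l)). split.
  - exists (rst G l), (fun x y => x = l /\ y = l). split; [|split].
    + apply body_val_iff. split; auto. apply cg_rst; auto.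
    + unfold vlabel, downset. split.
      * split; [intros x y [e1 e2]; rewrite e1, e2; tauto| intros x y z [e1 e2] [e3 e4]; rewrite e1, e4; tauto].
      * exists (fun x y => x = l /\ y = l). split; [tauto| intros x y h; exact h].
    + tauto.
  - assert (edge : forall x y, (rst G l x y \/ (x = l /\ y = l) \/
       (endpoint (rst G l) x /\ endpoint (fun x y => x = l /\ y = l) y)) -> G x y).
    { intros x y [h|[[-> ->]|[[w hw] [w' hw']]]].
      - apply h.
      - exact Hll.
      - assert (y = l) as -> by (destruct hw' as [[? ?]|[? ?]]; auto).
        destruct hw as [[? [? ?]]|[? [? ?]]]; auto. }
    intros x y hc. unfold gapp, clos in hc. destruct hc as [[<- [z [hz|hz]]]|ht].
    + apply edge in hz. destruct cg as [r0 _]. apply (r0 _ _ hz).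
    + apply edge in hz. destruct cg as [r0 _]. apply (r0 _ _ hz).
    + induction ht.
      * apply edge; auto.
      * destruct cg as [_ t]. eauto.
Qed.

Lemma lvl_S n : forall a G, TPup P n a G -> TPup P (S n) a G.
Proof.
  induction n; intros a G Ht; [contradiction|].
  apply char1 in Ht as [cg [r [Pr [hd [Hll Hb]]]]]. subst a.
  apply char2; auto.
Qed.

Lemma lvl_le n m a G : n <= m -> TPup P n a G -> TPup P m a G.
Proof. induction 1; auto. intros; apply lvl_S; auto. Qed.

Lemma uniform_k (bs : list A) (G : graph L) :
  (forall c, In c bs -> exists k, TPup P k c G) ->
  exists K, forall c, In c bs -> TPup P K c G.
Proof.
  induction bs; intros H.
  - exists 0; intros c [].
  - destruct (H a (or_introl eq_refl)) as [k hk].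
    destruct IHbs as [K hK]; [intros; apply H; right; auto|].
    exists (max k K). intros c [<-|hc].
    + eapply lvl_le; [|eauto]; lia.
    + eapply lvl_le; [|eauto]; lia.
Qed.

Lemma prune (CL : completely_labelled P) r : P r ->
  forall n b H, TPup P n b H ->
  (exists k, TPup P k b (rmv H (rlabel r))) \/
  (exists m, m <= n /\ TPup P m (rhead r) H).
Proof.
  intros Pr. induction n; intros b H Ht; [contradiction|].
  pose proof (char1 _ _ _ Ht) as [cg [r' [Pr' [hd [Hll Hb]]]]].
  destruct (classic (rlabel r' = rlabel r)) as [e|ne].
  - right. exists (S n). split; auto. assert (r' = r) by (apply CL; auto). subst. exact Ht.
  - destruct (classic (exists c, In c (rbody r') /\
       ~ exists k, TPup P k c (rmv (rst H (rlabel r')) (rlabel r)))) as [[c [Hc Hn]]|Hall].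
    + destruct (IHn c _ (Hb c Hc)) as [Hk|[m [Hm Hm2]]]; [contradiction|].
      right. exists m. split; [lia|]. apply mono_graph with (rst H (rlabel r')); auto.
      intros x y h; apply h.
    + left. destruct (uniform_k (rbody r') (rmv (rst H (rlabel r')) (rlabel r))) as [K hK].
      { intros c hc. apply NNPP; intro; apply Hall; eauto. }
      exists (S K). subst b. apply char2; auto.
      * apply cg_rmv; auto.
      * unfold rmv; auto.
      * intros c hc. apply mono_graph with (rmv (rst H (rlabel r')) (rlabel r)); auto.
        -- apply cg_rst, cg_rmv; auto.
        -- intros x y [[h1 [h2 h3]] [h4 h5]]. unfold rst, rmv. tauto.
Qed.

End S.

Lemma path_mono {L} (G H : graph L) s :
  (forall x y, G x y -> H x y) -> path_edges G s -> path_edges H s.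
Proof.
  intros hm. induction s as [|x s IH]; simpl; auto.
  destruct s as [|y s]; auto. intros [h1 h2]; split; auto.
Qed.

Lemma path_app {L} (G : graph L) l s :
  (forall x, In x s -> G x l) -> path_edges G s -> path_edges G (s ++ [l]).
Proof.
  induction s as [|x s IH]; simpl; auto. intros hx.
  destruct s as [|y s]; simpl.
  - intros _. split; auto.
  - intros [h1 h2]. split; auto. apply IH; auto.
Qed.

Lemma bounded_sub {L} (G H : graph L) h : gle G H -> bounded G h -> bounded H h.
Proof.
  intros le bd s [nd [fa pe]]. apply bd. split; auto. split.
  - rewrite Forall_forall in *. intros x hx; apply le, fa, hx.
  - eapply path_mono; eauto.
Qed.

Lemma bounded0 {L} (G : graph L) x : bounded G 0 -> G x x -> False.
Proof.
  intros bd hx. assert (length [x] <= 0); [|simpl in *; lia].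
  apply bd. split; [constructor; [intros []|constructor]|split; simpl; auto].
Qed.

Lemma bounded_strict {L} (G : graph L) h l :
  G l l -> bounded G (S h) -> bounded (rmv (rst G l) l) h.
Proof.
  intros Hll bd s [nd [fa pe]].
  rewrite Forall_forall in fa.
  assert (length (s ++ [l]) <= S h); [|rewrite length_app in *; simpl in *; lia].
  apply bd. split; [|split].
  - apply Permutation_NoDup with (l :: s).
    + apply Permutation_cons_append.
    + constructor; auto. intros hin. destruct (fa l hin) as [_ [hh _]]. auto.
  - apply Forall_app; split; [rewrite Forall_forall; intros x hx; apply fa, hx|].
    constructor; auto.
  - apply path_app.
    + intros x hx. apply (fa x hx).
    + eapply path_mono; [|eauto]. intros x y hh; apply hh.
Qed.

Lemma main_h {L A} (P : program L A) (CL : completely_labelled P) :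
  forall h (G : graph L), is_cgraph G -> bounded G h ->
  forall n a, TPup P n a G -> TPup P h a G.
Proof.
  induction h as [|h IHh]; intros G cg bd n a Ht.
  - destruct n; [contradiction|].
    apply char1 in Ht as [_ [r [_ [_ [Hll _]]]]]. exfalso; eapply bounded0; eauto.
  - revert G cg bd a Ht. induction n as [n IHn] using lt_wf_ind. intros G cg bd a Ht.
    destruct n; [contradiction|].
    pose proof (char1 _ _ _ _ _ _ Ht) as [_ [r [Pr [hd [Hll Hb]]]]]. subst a.
    destruct (classic (exists b, In b (rbody r) /\
       ~ exists k, TPup P k b (rmv (rst G (rlabel r)) (rlabel r)))) as [[b [Hin Hn]]|Hall].
    + destruct (prune _ _ _ CL _ Pr _ _ _ (Hb b Hin)) as [Hk|[m [Hm Hm2]]]; [contradiction|].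
      apply mono_graph with (rst G (rlabel r)); auto; [|intros x y hh; apply hh].
      apply IHn with m; auto; [lia|apply cg_rst; auto|].
      eapply bounded_sub; [|eauto]. intros x y hh; apply hh.
    + apply char2; auto. intros b hb.
      assert (exists k, TPup P k b (rmv (rst G (rlabel r)) (rlabel r))) as [k hk].
      { apply NNPP; intro; apply Hall; eauto. }
      apply mono_graph with (rmv (rst G (rlabel r)) (rlabel r)); auto.
      * eapply IHh; eauto. apply cg_rmv, cg_rst; auto. apply bounded_strict; auto.
      * apply cg_rst; auto.
      * intros x y hh; apply hh.
Qed.

Theorem mainTheorem18 (L A : Type) (P : program L A) (p : A) (k : ext_nat)
  (G : graph L) (h : nat) :
  completely_labelled P ->
  valid_k k ->
  is_cgraph G ->
  maximal_in (TPup_ext P k p) G ->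
  has_height G h ->
  le_ext h k ->
  TPup P h p G.
Proof.
  intros CL _ cg [Hmem _] [_ Hbd] _.
  destruct k as [n|]; simpl in Hmem.
  - eapply main_h; eauto.
  - destruct Hmem as [n Hn]. eapply main_h; eauto.
Qed.
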